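(* Let $H$ be a fixed graph and $s$ a fixed positive integer. Let $G$ be an $n$-vertex graph not containing $M_{s+1}$ (a matching of $s+1$ pairwise disjoint edges) as a subgraph, and let $B\subseteq V(G)$ be a set such that every connected component of $G-B$ has an odd number of vertices and, writing $A_1,\dots,A_m$ for the vertex sets of these components, $|B|+\sum_{i=1}^m \frac{|A_i|-1}{2}\le s$. Then, as $n\to\infty$ (with the implied constants depending only on $H$ and $s$): (i) every vertex $v\in V(G)\setminus B$ is contained in $O(n^{\alpha(H)-1})$ copies of $H$ in $G$; (ii) the number of copies of $H$ in $G$ that contain at least one edge with both endpoints outside $B$ is $O(n^{\alpha(H)-1})$.
   Context: All graphs are finite and simple. $\alpha(H)$ denotes the independence number of $H$ (the largest order of an independent set in $H$). A copy of $H$ in $G$ is a subgraph of $G$ isomorphic to $H$. By the Berge–Tutte theorem, a set $B$ as in the statement exists for every $M_{s+1}$-free graph $G$. *)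

(* Defs.v *)
From mathcomp Require Import all_boot.
Set Implicit Arguments. Unset Strict Implicit. Unset Printing Implicit Defensive.

Definition simple_graph (V : finType) (e : rel V) : Prop :=
  symmetric e /\ irreflexive e.

Definition indep (V : finType) (e : rel V) (S : {set V}) : bool :=
  [forall x in S, forall y in S, ~~ e x y].
Definition alpha (V : finType) (e : rel V) : nat :=
  \max_(S : {set V} | indep e S) #|S|.

Definition has_matching (V : finType) (e : rel V) (k : nat) : Prop :=
  exists (u w : 'I_k -> V),
    [/\ forall i, e (u i) (w i), injective u, injective w
      & forall i j, u i != w j].

(* A subgraph of G: a vertex set S and an edge set F (ordered pairs, stored
   symmetrically), with F contained in E(G) and edges having ends in S. *)
Definition is_copy (TH : finType) (eH : rel TH) (V : finType) (e : rel V)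
    (p : {set V} * {set V * V}) : bool :=
  let: (W, F) := p in
  [forall x in F, e x.1 x.2 && (x.1 \in W) && (x.2 \in W)] &&
  [exists f : {ffun TH -> V},
     [&& injectiveb f, W == [set f x | x in TH] &
         [forall x, forall y, eH x y == ((f x, f y) \in F)]]].

Definition copies (TH : finType) (eH : rel TH) (V : finType) (e : rel V) :=
  [set p : {set V} * {set V * V} | is_copy eH e p].

Definition del_rel (V : finType) (e : rel V) (B : {set V}) : rel V :=
  fun x y => [&& x \notin B, y \notin B & e x y].
Definition comps_minus (V : finType) (e : rel V) (B : {set V}) : {set {set V}} :=
  [set [set y | (y \notin B) && connect (del_rel e B) x y] | x in ~: B].

(* Main.v *)
Require Import Defs.
From mathcomp Require Import all_boot.
From mathcomp Require Import zify.
From Stdlib Require Import Lia.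

Lemma odd_bound m : odd m -> 1 < m -> m <= 3 * (m.-1./2).
Proof.
move=> om; move: (odd_double_half m); rewrite om; set k := m./2 => <-.
rewrite add1n succnK doubleK -muln2 => h; lia.
Qed.

Section Graph.
Variables (V : finType) (e : rel V) (B : {set V}) (s : nat).
Hypothesis irr : irreflexive e.
Hypothesis hodd : forall A, A \in comps_minus e B -> odd #|A|.
Hypothesis hsum : #|B| + \sum_(A in comps_minus e B) (#|A|).-1./2 <= s.

Definition Lset := [set x | (x \notin B) && [forall y, ~~ del_rel e B x y]].

Lemma notL_card : #|~: Lset| <= 3 * s.
Proof.
pose P := [set A in comps_minus e B | 1 < #|A|].
have sub : ~: Lset \subset B :|: cover P.
  apply/subsetP => x; rewrite !inE negb_and negbK.
  case: (boolP (x \in B)) => //= xB /existsP [y]; rewrite negbK => dxy.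
  pose A := [set y | (y \notin B) && connect (del_rel e B) x y].
  apply/bigcupP; exists A; last by rewrite inE xB connect0.
  rewrite inE; apply/andP; split; first by apply/imsetP; exists x; rewrite ?inE.
  have xy : x != y.
    apply/eqP => exy; move: dxy; rewrite /del_rel exy irr.
    by rewrite !andbF.
  have : [set x; y] \subset A.
    apply/subsetP => w; rewrite !inE => /orP [] /eqP ->.
      by rewrite xB connect0.
    move: (dxy); rewrite /del_rel => /and3P [_ -> _] /=.
    exact: connect1.
  by move/subset_leq_card; rewrite cards2 xy.
apply: (leq_trans (subset_leq_card sub)).
apply: (leq_trans (leq_card_setU _ _)).
have hc : #|cover P| <= 3 * \sum_(A in comps_minus e B) (#|A|).-1./2.
  apply: (leq_trans (leq_card_cover P)).
  rewrite big_distrr /= big_mkcond [X in _ <= X]big_mkcond /=.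
  apply: leq_sum => A _; rewrite inE.
  case: (boolP (A \in comps_minus e B)) => //= hA.
  case: ifP => // h; exact: odd_bound (hodd _ hA) h.
move: hsum hc; lia.
Qed.
End Graph.

Section Count.
Variables (TH V : finType) (eH : rel TH).

Lemma count_lemma (Free : {set V}) (M : nat) (M1 : 0 < M) (hM : #|~: Free| <= M)
  (S : {set {ffun TH -> V}})
  (hS : forall g, g \in S -> exists z, (g z \notin Free) /\ indep eH (z |: [set x | g x \in Free]))
  (n1 : 0 < #|V|) :
  #|S| * #|V| <= #|{set TH}| * M ^ #|TH| * #|V| ^ alpha eH.
Proof.
set n := #|V|.
have -> : #|S| = \sum_(I : {set TH}) #|[set g in S | [set x | g x \in Free] == I]|.
  rewrite -sum1_card (partition_big (fun g : {ffun TH -> V} => [set x | g x \in Free]) predT) //=.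
  apply: eq_bigr => I _; rewrite -sum1_card; apply: eq_bigl => g; by rewrite inE.
rewrite big_distrl /= -mulnA.
have -> : #|{set TH}| * (M ^ #|TH| * n ^ alpha eH) = \sum_(I : {set TH}) (M ^ #|TH| * n ^ alpha eH).
  by rewrite sum_nat_const.
apply: leq_sum => I _.
set T := [set g in S | _].
have [/eqP -> | /set0Pn [g0 g0T]] := boolP (T == set0); first by rewrite cards0.
have aI : #|I|.+1 <= alpha eH.
  move: g0T; rewrite inE => /andP [/hS [z [hz hind]] /eqP hI].
  have : #|z |: I| <= alpha eH.
    rewrite -hI /alpha; exact: (@leq_bigmax_cond _ (indep eH) (fun S => #|S|) _ hind).
  by rewrite cardsU1 -hI inE hz.
pose F := fun x => if x \in I then [set: V] else ~: Free.
have sub : T \subset family F.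
  apply/subsetP => g; rewrite inE => /andP [_ /eqP hI]; apply/familyP => x.
  rewrite /F; case: ifP => xI; first by rewrite inE.
  by rewrite inE; move: xI; rewrite -hI inE => ->.
apply: (@leq_trans (#|family F| * n)); first by rewrite leq_mul2r (subset_leq_card sub) orbT.
rewrite card_family.
have -> : foldr muln 1 [seq #|F x| | x : TH] = \prod_x #|F x|.
  by rewrite foldrE big_image.
apply: (@leq_trans ((\prod_x (if x \in I then n else M)) * n)).
  rewrite leq_mul2r; apply/orP; right; apply: leq_prod => x _.
  by rewrite /F; case: ifP => _; rewrite ?cardsT.
rewrite (bigID (mem I)) /=.
have -> : \prod_(i in I) (if i \in I then n else M) = n ^ #|I|.
  by rewrite -prod_nat_const; apply: eq_bigr => x ->.
have -> : \prod_(i | i \notin I) (if i \in I then n else M) = M ^ #|~: I|.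
  rewrite -prod_nat_const; apply: eq_big => x; first by rewrite inE.
  by move=> /negbTE ->.
rewrite mulnAC -expnSr mulnC.
apply: leq_mul; first by apply: leq_pexp2l => //; apply: max_card.
exact: leq_pexp2l.
Qed.
End Count.

Section Copies.
Variables (TH V : finType) (eH : rel TH) (e : rel V).

Definition phi (g : {ffun TH -> V}) : {set V} * {set V * V} :=
  ([set g x | x in TH], [set q | [exists x, exists y, eH x y && (q == (g x, g y))]]).

Lemma copy_phi p : p \in copies eH e -> exists f : {ffun TH -> V},
  [/\ p = phi f, (forall x y, eH x y -> e (f x) (f y)) &
      (forall x y, eH x y = ((f x, f y) \in p.2))].
Proof.
case: p => W F; rewrite inE /is_copy => /andP [/forallP hF /existsP [f /and3P [_ /eqP hW /forallP hE]]].
have hE' : forall x y, eH x y = ((f x, f y) \in F).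
  by move=> x y; move: (hE x) => /forallP /(_ y) /eqP.
have hom : forall x y, eH x y -> e (f x) (f y).
  move=> x y; rewrite hE' => hin; move: (hF (f x, f y)); rewrite hin /=.
  by case/andP => /andP [].
exists f; split => //.
rewrite /phi hW; congr pair; apply/setP => q; rewrite inE; apply/idP/idP.
  move=> qF; move: (hF q); rewrite qF /= => /andP [/andP [_ ]].
  rewrite hW => /imsetP [x _ hx] /imsetP [y _ hy].
  apply/existsP; exists x; apply/existsP; exists y.
  rewrite hE' -hx -hy; case: q qF {hx hy} => a b /= ->; by rewrite eqxx.
by case/existsP => x /existsP [y /andP [hxy /eqP ->]]; rewrite -hE'.
Qed.

Lemma key (B L : {set V}) (g : V -> V) : True.
Proof. by []. Qed.
End Copies.

Section Indep.
Variables (TH V : finType) (eH : rel TH) (e : rel V) (B : {set V}).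
Hypothesis symH : symmetric eH.
Hypothesis irrH : irreflexive eH.

Lemma indep_lemma (g : TH -> V) (Free : {set V}) (z : TH) :
  (forall x y, eH x y -> e (g x) (g y)) ->
  Free \subset Lset V e B -> g z \notin B ->
  indep eH (z |: [set x | g x \in Free]).
Proof.
move=> hom sF gz.
have LB : forall u, u \in Lset V e B -> u \notin B by move=> u; rewrite inE => /andP [].
have k : forall x y, g x \in Lset V e B -> g y \notin B -> ~~ eH x y.
  move=> x y hx hy; apply/negP => hxy.
  move: (hx); rewrite inE => /andP [_ /forallP /(_ (g y))].
  by rewrite /del_rel (LB _ hx) hy (hom _ _ hxy).
have inS : forall x, x \in z |: [set x | g x \in Free] -> (x == z) || (g x \in Lset V e B).
  move=> x; rewrite in_setU1 => /orP [-> //|hx]; apply/orP; right; rewrite inE in hx; exact: (subsetP sF).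
have nB : forall x, x \in z |: [set x | g x \in Free] -> g x \notin B.
  by move=> x /inS /orP [/eqP -> //| /LB].
apply/forallP => x; apply/implyP => hx; apply/forallP => y; apply/implyP => hy.
case/orP: (inS x hx) => [/eqP xz|hxL]; last exact: k hxL (nB _ hy).
case/orP: (inS y hy) => [/eqP yz|hyL]; first by rewrite xz yz irrH.
by rewrite symH; exact: k hyL (nB _ hx).
Qed.
End Indep.

Theorem mainTheorem1 :
  forall (TH : finType) (eH : rel TH), simple_graph eH ->
  forall s : nat, 0 < s ->
  exists C N : nat, forall n : nat, N <= n ->
  forall e : rel 'I_n, simple_graph e -> ~ has_matching e s.+1 ->
  forall B : {set 'I_n},
    (forall A, A \in comps_minus e B -> odd #|A|) ->
    #|B| + \sum_(A in comps_minus e B) (#|A|).-1./2 <= s ->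
    (forall v, v \notin B ->
       #|[set p in copies eH e | v \in p.1]| * n <= C * n ^ alpha eH)
    /\ #|[set p in copies eH e |
          [exists x in p.2, (x.1 \notin B) && (x.2 \notin B)]]| * n
         <= C * n ^ alpha eH.
Proof.
move=> TH eH [symH irrH] s s0.
exists (#|{set TH}| * (3 * s).+1 ^ #|TH|), 1 => n n1 e [syme irre] _ B hodd hsum.
have hL := @notL_card _ e B s irre hodd hsum.
set L := Lset 'I_n e B in hL.
have LB : forall u, u \in L -> u \notin B by move=> u; rewrite inE => /andP [].
have n1' : 0 < #|'I_n| by rewrite card_ord.
pose Sg (Free : {set 'I_n}) := [set g : {ffun TH -> 'I_n} |
   [exists z, (g z \notin Free) && indep eH (z |: [set x | g x \in Free])]].
have cnt : forall Free, #|~: Free| <= (3 * s).+1 ->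
    #|Sg Free| * n <= #|{set TH}| * (3 * s).+1 ^ #|TH| * n ^ alpha eH.
  move=> Free hF; have := @count_lemma TH _ eH Free _ (ltn0Sn _) hF (Sg Free).
  rewrite card_ord; move=> H; apply: H => //.
  by move=> g; rewrite inE => /existsP [z /andP [h1 h2]]; exists z.
split.
  move=> v vB.
  apply: leq_trans (cnt (L :\ v) _); last first.
    rewrite setCD; apply: (leq_trans (leq_card_setU _ _)); rewrite cards1 addn1 ltnS //.
  rewrite leq_mul2r; apply/orP; right.
  apply: (@leq_trans #|phi _ _ eH @: (Sg (L :\ v))|); last exact: leq_imset_card.
  apply: subset_leq_card; apply/subsetP => p; rewrite inE => /andP [hp vp].
  have [f [pf hom hE]] := @copy_phi _ _ eH e _ hp.
  apply/imsetP; exists f => //.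
  move: vp; rewrite pf /= => /imsetP [z _ vz].
  rewrite inE; apply/existsP; exists z; rewrite -vz !inE eqxx /=.
  apply: (@indep_lemma _ _ eH e B symH irrH) => //; first exact: subsetDl.
  by rewrite -vz.
apply: leq_trans (cnt L (leqW hL)).
rewrite leq_mul2r; apply/orP; right.
apply: (@leq_trans #|phi _ _ eH @: (Sg L)|); last exact: leq_imset_card.
apply: subset_leq_card; apply/subsetP => p; rewrite inE => /andP [hp /existsP [q /andP [qp /andP [q1 q2]]]].
have [f [pf hom hE]] := @copy_phi _ _ eH e _ hp.
apply/imsetP; exists f => //.
move: qp; rewrite pf /= inE => /existsP [x /existsP [y /andP [hxy /eqP qxy]]].
rewrite qxy /= in q1 q2.
rewrite inE; apply/existsP; exists x; apply/andP; split.
  rewrite inE negb_and q1 /=; apply/existsP; exists (f y).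
  by rewrite negbK /del_rel q1 q2 hom.
exact: (@indep_lemma _ _ eH e B symH irrH).
Qed.
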